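(* Let $\mathcal{M}=(F,+,\cdot,0,1,\dots)$ be a pseudofinite field with possibly extra structure, and let $\pmb{\delta}_F$ be the coarse pseudofinite dimension normalised by $|F|$. Suppose that for every formula $\varphi(x,y)$ with $|x|=1$ and every $b\in F^{|y|}$, $\pmb{\delta}_F(\varphi(x,b))\in\{0,1\}$. Then $\pmb{\delta}_F$ is definable, and for every formula $\psi(x,y)$ and every $c\in F^{|y|}$, $\pmb{\delta}_F(\psi(x,c))\in\{0,\dots,|x|\}$.
   Context: $\mathcal{M}$ is an infinite ultraproduct of finite structures whose reduct to the ring language is a field. For internal $D=\prod D_i/\mathcal{U}$, $|D|=(|D_i|)/\mathcal{U}\in\mathbb{R}^*$; for definable $A$, $\pmb{\delta}_F(A)=\mathrm{st}(\log|A|/\log|F|)$. $\pmb{\delta}_F$ is definable if (i) for every parameter-free $\phi(x,y)$ and reals $r_1<r_2$ there is a $\emptyset$-definable $D$ with $\{a:\pmb{\delta}_F(\phi(x,a))\le r_1\}\subseteq D\subseteq\{a:\pmb{\delta}_F(\phi(x,a))<r_2\}$, and (ii) $\{\pmb{\delta}_F(\phi(x,a)):a\}$ is finite for every parameter-free $\phi(x,y)$. *)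

(* Defs.v *)
From HB Require Import structures.
From mathcomp Require Import all_boot all_order all_algebra.
From mathcomp Require Import all_classical all_reals ereal exp.
Set Implicit Arguments. Unset Strict Implicit. Unset Printing Implicit Defensive.
Import Order.TTheory GRing.Theory Num.Theory.
Local Open Scope ring_scope.
Local Open Scope ereal_scope.

Record signature := Signature {
  fsym : Type; farity : fsym -> nat;
  rsym : Type; rarity : rsym -> nat;
  s_add : fsym; s_mul : fsym; s_zero : fsym; s_one : fsym;
  ar_add : farity s_add = 2%N; ar_mul : farity s_mul = 2%N;
  ar_zero : farity s_zero = 0%N; ar_one : farity s_one = 0%N }.

Inductive term (L : signature) : Type :=
  | tvar : nat -> term L
  | tapp : forall f : fsym L, ('I_(farity f) -> term L) -> term L.

Inductive formula (L : signature) : Type :=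
  | ffalse : formula L
  | feq : term L -> term L -> formula L
  | frel : forall r : rsym L, ('I_(rarity r) -> term L) -> formula L
  | fnot : formula L -> formula L
  | fand : formula L -> formula L -> formula L
  | fex : nat -> formula L -> formula L.

(* finite (nonempty-or-not) L-structures *)
Record fin_struct (L : signature) := FinStruct {
  fcar :> finType;
  fint : forall f : fsym L, ('I_(farity f) -> fcar) -> fcar;
  rint : forall r : rsym L, ('I_(rarity r) -> fcar) -> bool }.

Fixpoint evalt (L : signature) (S : fin_struct L) (e : nat -> S) (t : term L) : S :=
  match t with
  | tvar k => e k
  | tapp f a => @fint _ S f (fun j => evalt e (a j))
  end.

Record ultrafilter (I : Type) := Ultrafilter {
  uf :> (I -> Prop) -> Prop;
  uf_T : uf (fun _ => True);
  uf_not0 : ~ uf (fun _ => False);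
  uf_mono : forall A B : I -> Prop, (forall i, A i -> B i) -> uf A -> uf B;
  uf_inter : forall A B : I -> Prop, uf A -> uf B -> uf (fun i => A i /\ B i);
  uf_ultra : forall A : I -> Prop, uf A \/ uf (fun i => ~ A i) }.

Definition ordvoid (T : Type) (n : nat) (H : n = 0%N) (j : 'I_n) : T.
Proof. exfalso; case: j => k; rewrite H. by []. Defined.

Section Ultraproduct.
Variables (L : signature) (I : Type) (U : ultrafilter I) (M : I -> fin_struct L).

(* elements of the ultraproduct M = prod_i M_i / U, represented by sequences;
   equality of M is equality U-almost everywhere *)
Definition elt := forall i, M i.
Definition eqU (a b : elt) : Prop := U (fun i => a i = b i).

Definition evalU (e : nat -> elt) (t : term L) : elt :=
  fun i => evalt (fun k => e k i) t.

Definition upd (e : nat -> elt) (v : nat) (x : elt) : nat -> elt :=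
  fun k => if k == v then x else e k.

Fixpoint satU (e : nat -> elt) (p : formula L) : Prop :=
  match p with
  | ffalse => False
  | feq t1 t2 => U (fun i => evalU e t1 i = evalU e t2 i)
  | frel r a => U (fun i => @rint _ (M i) r (fun j => evalU e (a j) i))
  | fnot q => ~ satU e q
  | fand q1 q2 => satU e q1 /\ satU e q2
  | fex v q => exists x : elt, satU (upd e v x) q
  end.

Definition zeroU : elt := fun i => @fint _ (M i) (s_zero L) (@ordvoid _ _ (ar_zero L)).
Definition oneU : elt := fun i => @fint _ (M i) (s_one L) (@ordvoid _ _ (ar_one L)).
Definition addU (a b : elt) : elt :=
  evalU (fun k => if k == 0%N then a else b) (tapp (fun j : 'I_(farity (s_add L)) => tvar L j)).
Definition mulU (a b : elt) : elt :=
  evalU (fun k => if k == 0%N then a else b) (tapp (fun j : 'I_(farity (s_mul L)) => tvar L j)).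

Definition ultra_is_field : Prop :=
  (forall a b c, eqU (addU a (addU b c)) (addU (addU a b) c)) /\
      (forall a b, eqU (addU a b) (addU b a)) /\
      (forall a, eqU (addU zeroU a) a) /\
      (forall a, exists b, eqU (addU a b) zeroU) /\
      (forall a b c, eqU (mulU a (mulU b c)) (mulU (mulU a b) c)) /\
      (forall a b, eqU (mulU a b) (mulU b a)) /\
      (forall a, eqU (mulU oneU a) a) /\
      (forall a b c, eqU (mulU a (addU b c)) (addU (mulU a b) (mulU a c))) /\
      ~ eqU zeroU oneU /\
      (forall a, ~ eqU a zeroU -> exists b, eqU (mulU a b) oneU).

Definition ultra_infinite : Prop :=
  forall n : nat, exists a : 'I_n -> elt, forall j k, j != k -> ~ eqU (a j) (a k).

Definition tup_env (n : nat) (x : 'I_n -> elt) (rest : nat -> elt) : nat -> elt :=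
  fun k => match (insub k : option 'I_n) with Some j => x j | None => rest (k - n)%N end.

(* phi(M, b) as a subset of M^n : phi has x = variables 0..n-1,
   y = variables n..n+m-1 (any further free variable is read as the constant 0) *)
Definition phiset (n m : nat) (phi : formula L) (b : 'I_m -> elt) : ('I_n -> elt) -> Prop :=
  fun a => satU (tup_env a (tup_env b (fun _ => zeroU))) phi.

Definition zdef (m : nat) (chi : formula L) : ('I_m -> elt) -> Prop :=
  fun b => satU (tup_env b (fun _ => zeroU)) chi.

Variable R : realType.

(* A = prod_i D_i / U (internal set) *)
Definition represents (n : nat) (A : ('I_n -> elt) -> Prop)
    (D : forall i, {set {ffun 'I_n -> M i}}) : Prop :=
  forall a : 'I_n -> elt, A a <-> U (fun i => [ffun k => a k i] \in D i).

Definition lnE (N : nat) : \bar R := if N == 0%N then -oo else (ln (N%:R : R))%:E.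

(* standard part (in the extended reals) of the hyperreal (x_i)/U *)
Definition stU (x : I -> \bar R) (r : \bar R) : Prop :=
  match r with
  | EFin r0 => forall eps : R, (0 < eps)%R ->
       U (fun i => exists y : R, x i = y%:E /\ (`|y - r0| < eps)%R)
  | +oo => forall c : R, U (fun i => c%:E < x i)
  | -oo => forall c : R, U (fun i => x i < c%:E)
  end.

Definition is_delta (n : nat) (A : ('I_n -> elt) -> Prop) (r : \bar R) : Prop :=
  exists D : forall i, {set {ffun 'I_n -> M i}},
    represents A D /\
    stU (fun i => lnE #|D i| * ((ln (#|M i|%:R : R))^-1)%:E) r.

Definition delta (n : nat) (A : ('I_n -> elt) -> Prop) : \bar R :=
  xget -oo [set r | is_delta A r].

Definition delta_definable : Prop :=
  (forall (n m : nat) (phi : formula L) (r1 r2 : R), (r1 < r2)%R ->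
     exists chi : formula L, forall b : 'I_m -> elt,
       (delta (@phiset n m phi b) <= r1%:E -> zdef chi b) /\
       (zdef chi b -> delta (@phiset n m phi b) < r2%:E))
  /\
  (forall (n m : nat) (phi : formula L),
     exists s : seq (\bar R), forall b : 'I_m -> elt, delta (@phiset n m phi b) \in s).

End Ultraproduct.

Arguments phiset {L I} U {M} n {m} phi b.
Arguments zdef {L I} U {M} {m} chi b.
Arguments delta {L I} U {M} R {n} A.

(* Main.v *)
Require Import Defs.
From HB Require Import structures.
From mathcomp Require Import all_boot all_order all_algebra.
From mathcomp Require Import all_classical all_reals ereal exp.
From mathcomp Require Import sequences lra zify.
From Stdlib Require Import Ring.
Import Order.TTheory GRing.Theory Num.Theory.
Set Implicit Arguments. Unset Strict Implicit. Unset Printing Implicit Defensive.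

Module C1.

Section UF.
Variables (I : Type) (U : ultrafilter I).

Lemma U_mono (A B : I -> Prop) : U A -> (forall i, A i -> B i) -> U B.
Proof. by move=> HA H; apply: uf_mono H HA. Qed.

Lemma U_and (A B : I -> Prop) : U A -> U B -> U (fun i => A i /\ B i).
Proof. exact: uf_inter. Qed.

Lemma U_and3 (A B C : I -> Prop) : U A -> U B -> U C -> U (fun i => [/\ A i, B i & C i]).
Proof. move=> a b c; apply: (U_mono (U_and a (U_and b c))) => i [x [y z]]; by split. Qed.

Lemma U_contra (A : I -> Prop) : U A -> U (fun i => ~ A i) -> False.
Proof. move=> a b; apply: (@uf_not0 _ U); exact: (U_mono (uf_inter a b) (fun i h => proj2 h (proj1 h))). Qed.

Lemma U_notP (A : I -> Prop) : ~ U A <-> U (fun i => ~ A i).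
Proof.
split; first by case: (uf_ultra U A).
by move=> H HA; apply: U_contra HA H.
Qed.

Lemma U_imp (A B : I -> Prop) : U A -> U (fun i => A i -> B i) -> U B.
Proof. move=> a b; apply: (U_mono (U_and a b)) => i [x y]; exact: y. Qed.

Lemma U_const (P : Prop) : U (fun _ => P) <-> P.
Proof.
split; last by move=> p; apply: (U_mono (uf_T U)) => _.
move=> H; case: (pselect P) => // nP; exfalso; apply: (@uf_not0 _ U); exact: (U_mono H (fun _ p => nP p)).
Qed.

Lemma U_or (A B : I -> Prop) : U (fun i => A i \/ B i) -> U A \/ U B.
Proof.
move=> H; case: (uf_ultra U A) => HA; first by left.
right; apply: (U_mono (U_and H HA)) => i [[]//].
Qed.

Lemma U_forall_seq (J : eqType) (A : J -> I -> Prop) (s : seq J) :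
  (forall j, j \in s -> U (A j)) -> U (fun i => forall j, j \in s -> A j i).
Proof.
elim: s => [|x s IH] H; first by apply: (U_mono (uf_T U)) => i _ j.
have Hx : U (A x) by apply: H; rewrite inE eqxx.
have Hs : U (fun i => forall j, j \in s -> A j i).
  by apply: IH => j js; apply: H; rewrite inE js orbT.
apply: (U_mono (U_and Hx Hs)) => i [a b] j; rewrite inE => /orP[/eqP->//|]; exact: b.
Qed.

Lemma U_forall_fin (J : finType) (A : J -> I -> Prop) :
  (forall j, U (A j)) -> U (fun i => forall j, A j i).
Proof.
move=> H; have := @U_forall_seq J A (enum J) (fun j _ => H j).
by move=> H2; apply: (U_mono H2) => i Hi j; apply: Hi; rewrite mem_enum.
Qed.

Lemma U_choice (T : I -> Type) (a0 : forall i, T i) (P : forall i, T i -> Prop) :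
  (forall a : (forall i, T i), U (fun i => P i (a i))) -> U (fun i => forall w, P i w).
Proof.
move=> H; case: (uf_ultra U (fun i => forall w, P i w)) => // H1; exfalso.
pose a i := match pselect (exists w, ~ P i w) with
  | left h => proj1_sig (cid h) | right _ => a0 i end.
apply: (U_contra (H a)); apply: (U_mono H1) => i Hi.
rewrite /a; case: (pselect _) => [h|h].
  by case: (cid h).
by exfalso; apply: Hi => w; case: (pselect (P i w)) => // nw; exfalso; apply: h; exists w.
Qed.

End UF.

Section Sat.
Variable L : signature.

Definition updi (T : Type) (e : nat -> T) (v : nat) (x : T) : nat -> T :=
  fun k => if k == v then x else e k.

Fixpoint sati (S : fin_struct L) (e : nat -> S) (p : formula L) : Prop :=
  match p with
  | ffalse => False
  | feq t1 t2 => evalt e t1 = evalt e t2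
  | Defs.frel r a => @rint _ S r (fun j => evalt e (a j))
  | fnot q => ~ sati e q
  | fand q1 q2 => sati e q1 /\ sati e q2
  | fex v q => exists x : S, sati (updi e v x) q
  end.

Lemma sati_ext (S : fin_struct L) (e e' : nat -> S) p :
  (forall k, e k = e' k) -> (sati e p <-> sati e' p).
Proof. by move=> H; have -> : e = e' by apply: functional_extensionality_dep. Qed.

Variables (I : Type) (U : ultrafilter I) (M : I -> fin_struct L).

Definition cmp (e : nat -> elt M) (i : I) : nat -> M i := fun k => e k i.

Lemma cmp_upd e v x i : cmp (upd e v x) i = updi (cmp e i) v (x i).
Proof. apply: functional_extensionality_dep => k; rewrite /cmp /upd /updi; by case: (k == v). Qed.

Lemma evalU_cmp e t i : evalU e t i = evalt (cmp e i) t.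
Proof. by []. Qed.

Lemma los (a0 : elt M) (p : formula L) (e : nat -> elt M) :
  satU U e p <-> U (fun i => sati (cmp e i) p).
Proof.
elim: p e => [|t1 t2|r a|q IH|q1 IH1 q2 IH2|v q IH] e /=.
- split => // H; exact: (@uf_not0 _ U).
- by [].
- by [].
- rewrite IH; exact: U_notP.
- rewrite IH1 IH2; split; first by case; apply: U_and.
  move=> H; split; apply: (U_mono H) => i []//.
- split.
    case=> x /IH H; apply: (U_mono H) => i Hi; exists (x i); by rewrite -cmp_upd.
  move=> H.
  pose x i := match pselect (exists w, sati (updi (cmp e i) v w) q) with
    | left h => proj1_sig (cid h) | right _ => a0 i end.
  exists x; apply/IH; apply: (U_mono H) => i Hi; rewrite cmp_upd /x.
  case: (pselect _) => [h|h]; first by case: (cid h).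
  by exfalso; apply: h.
Qed.

End Sat.

End C1.
Import C1.

Module C2.

Definition tenv (T : Type) (n : nat) (x : 'I_n -> T) (rest : nat -> T) : nat -> T :=
  fun k => match (insub k : option 'I_n) with Some j => x j | None => rest (k - n)%N end.

Definition cons_env (T : Type) (x : T) (e : nat -> T) : nat -> T :=
  fun k => match k with 0 => x | k'.+1 => e k' end.

Section Tenv.
Variable T : Type.

Lemma tenv_lt n (x : 'I_n -> T) rest k (h : (k < n)%N) : tenv x rest k = x (Ordinal h).
Proof. rewrite /tenv insubT /=; congr x; exact: val_inj. Qed.

Lemma tenv_ge n (x : 'I_n -> T) rest k : (n <= k)%N -> tenv x rest k = rest (k - n)%N.
Proof. by move=> h; rewrite /tenv insubF // ltnNge h. Qed.

Lemma tenv0 (x : 'I_0 -> T) rest k : tenv x rest k = rest k.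
Proof. by rewrite tenv_ge // subn0. Qed.

Lemma tenvS n (x : 'I_n.+1 -> T) rest k :
  tenv x rest k = cons_env (x ord0) (tenv (fun j => x (lift ord0 j)) rest) k.
Proof.
case: k => [|k] /=; first by rewrite (tenv_lt _ _ (ltn0Sn n)); congr x; exact: val_inj.
case: (ltnP k n) => h.
  have h' : (k.+1 < n.+1)%N by [].
  rewrite (tenv_lt _ _ h') (tenv_lt _ _ h); congr x; exact: val_inj.
by rewrite !tenv_ge.
Qed.

Lemma tenv_cat n m (x : 'I_n -> T) (b : 'I_m -> T) z k :
  tenv (fun j : 'I_(n + m) => tenv x (tenv b z) j) z k = tenv x (tenv b z) k.
Proof.
case: (ltnP k (n + m)) => h; first by rewrite (tenv_lt _ _ h).
rewrite tenv_ge // tenv_ge ?(leq_trans (leq_addr m n)) // tenv_ge; last by rewrite leq_subRL ?(leq_trans (leq_addr m n)).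
by rewrite subnDA.
Qed.

Lemma tenv_ext n (x y : 'I_n -> T) r r' k :
  (forall j, x j = y j) -> (forall k, r k = r' k) -> tenv x r k = tenv y r' k.
Proof. by move=> H1 H2; rewrite /tenv; case: insub. Qed.

End Tenv.

Lemma tup_envE L I (M : I -> fin_struct L) n (x : 'I_n -> elt M) rest :
  tup_env x rest = tenv x rest.
Proof. by []. Qed.

Lemma cmp_tenv L I (M : I -> fin_struct L) n (x : 'I_n -> elt M) rest (i : I) :
  cmp (tenv x rest) i = tenv (fun j => x j i) (cmp rest i).
Proof. by apply: functional_extensionality_dep => k; rewrite /cmp /tenv; case: insub. Qed.

Section Ren.
Variable L : signature.

Fixpoint rent (s : nat -> nat) (t : term L) : term L :=
  match t with
  | tvar k => tvar L (s k)
  | tapp f a => tapp (fun j => rent s (a j))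
  end.

Fixpoint renf (s : nat -> nat) (p : formula L) : formula L :=
  match p with
  | ffalse => ffalse L
  | feq t1 t2 => feq (rent s t1) (rent s t2)
  | Defs.frel r a => Defs.frel (fun j => rent s (a j))
  | fnot q => fnot (renf s q)
  | fand q1 q2 => fand (renf s q1) (renf s q2)
  | fex v q => fex (s v) (renf s q)
  end.

Lemma evalt_ren (S : fin_struct L) (e : nat -> S) s t :
  evalt e (rent s t) = evalt (fun k => e (s k)) t.
Proof.
elim: t => [k|f a IH] //=; congr fint; apply: functional_extensionality_dep => j; exact: IH.
Qed.

Lemma sati_ren (S : fin_struct L) s p : injective s ->
  forall (e : nat -> S), sati e (renf s p) <-> sati (fun k => e (s k)) p.
Proof.
move=> inj; elim: p => [|t1 t2|r a|q IH|q1 IH1 q2 IH2|v q IH] e /=.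
- by [].
- by rewrite !evalt_ren.
- by have -> : (fun j => evalt e (rent s (a j))) = (fun j => evalt (fun k => e (s k)) (a j))
    by apply: functional_extensionality_dep => j; rewrite evalt_ren.
- by rewrite IH.
- by rewrite IH1 IH2.
- have E x : (fun k => updi e (s v) x (s k)) = updi (fun k => e (s k)) v x.
    by apply: functional_extensionality_dep => k; rewrite /updi (inj_eq inj).
  by split; case=> x H; exists x; move: H; rewrite IH E.
Qed.

Definition f_or (p q : formula L) := fnot (fand (fnot p) (fnot q)).
Definition f_all v (p : formula L) := fnot (fex v (fnot p)).

Lemma sati_or (S : fin_struct L) (e : nat -> S) p q : sati e (f_or p q) <-> sati e p \/ sati e q.
Proof.
rewrite /=; split; last by case=> H [] //.
move=> H; case: (pselect (sati e p)) => hp; first by left.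
case: (pselect (sati e q)) => hq; first by right.
by exfalso; apply: H.
Qed.

Lemma sati_all (S : fin_struct L) (e : nat -> S) v p :
  sati e (f_all v p) <-> forall x, sati (updi e v x) p.
Proof.
rewrite /=; split; last by move=> H [x]; apply.
move=> H x; case: (pselect (sati (updi e v x) p)) => // h; exfalso; apply: H; by exists x.
Qed.

Definition tbin (f : Defs.fsym L) (t1 t2 : term L) : term L :=
  tapp (fun j : 'I_(farity f) => if (j : nat) == 0%N then t1 else t2).
Definition tadd := tbin (Defs.s_add L).
Definition tmul := tbin (Defs.s_mul L).

Definition addi (S : fin_struct L) (x y : S) : S :=
  fint (fun j : 'I_(farity (Defs.s_add L)) => if (j : nat) == 0%N then x else y).
Definition muli (S : fin_struct L) (x y : S) : S :=
  fint (fun j : 'I_(farity (Defs.s_mul L)) => if (j : nat) == 0%N then x else y).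
Definition zeroi (S : fin_struct L) : S := fint (@ordvoid S _ (ar_zero L)).
Definition onei (S : fin_struct L) : S := fint (@ordvoid S _ (ar_one L)).

Lemma evalt_add (S : fin_struct L) (e : nat -> S) t1 t2 :
  evalt e (tadd t1 t2) = addi (evalt e t1) (evalt e t2).
Proof. rewrite /= /addi; congr fint; apply: functional_extensionality_dep => j; by case: ifP. Qed.
Lemma evalt_mul (S : fin_struct L) (e : nat -> S) t1 t2 :
  evalt e (tmul t1 t2) = muli (evalt e t1) (evalt e t2).
Proof. rewrite /= /muli; congr fint; apply: functional_extensionality_dep => j; by case: ifP. Qed.

End Ren.

End C2.
Import C2.

Module C3.

Definition fieldish (T : Type) (add mul : T -> T -> T) (zero one : T) : Prop :=
 (forall a b c, add a (add b c) = add (add a b) c) /\ (forall a b, add a b = add b a) /\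
 (forall a, add zero a = a) /\ (forall a, exists b, add a b = zero) /\
 (forall a b c, mul a (mul b c) = mul (mul a b) c) /\ (forall a b, mul a b = mul b a) /\
 (forall a, mul one a = a) /\ (forall a b c, mul a (add b c) = add (mul a b) (mul a c)) /\
 zero <> one /\ (forall a, a <> zero -> exists b, mul a b = one).

Section Alg.
Variables (T : Type) (add mul : T -> T -> T) (zero one : T).
Hypothesis F : fieldish add mul zero one.

Definition opp (a : T) : T :=
  proj1_sig (cid (proj1 (proj2 (proj2 (proj2 F))) a)).
Lemma oppP a : add a (opp a) = zero.
Proof. rewrite /opp; by case: (cid _). Qed.

Lemma rt : ring_theory zero one add mul (fun x y => add x (opp y)) opp (@eq T).
Proof.
case: F => A1 [A2 [A3 [A4 [M1 [M2 [M3 [D _]]]]]]].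
split => //.
- by move=> x y z; rewrite M2 D !(M2 z).
- by move=> x; rewrite oppP.
Qed.

Add Ring Tring : rt.

Lemma field_uniq a b c d z z' :
  add a (mul z c) = add b (mul z d) -> add a (mul z' c) = add b (mul z' d) ->
  (a <> b \/ c <> d) -> z = z'.
Proof.
move=> e1 e2 hne.
have inv : forall w, w <> zero -> exists v, mul w v = one.
  by case: F => _ [_ [_ [_ [_ [_ [_ [_ [_ H]]]]]]]].
have z1 : zero <> one by case: F => _ [_ [_ [_ [_ [_ [_ [_ [H _]]]]]]]].
have ecd : c <> d.
  move=> ecd; case: hne => // nab; apply: nab; subst d.
  have -> : a = add (add a (mul z c)) (opp (mul z c)) by ring.
  rewrite e1; ring.
have w0 : add c (opp d) <> zero.
  move=> h; apply: ecd.
  have -> : c = add (add c (opp d)) d by ring.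
  rewrite h; ring.
have key : mul (add z (opp z')) (add c (opp d)) =
   add (add (add a (mul z c)) (opp (add b (mul z d))))
       (opp (add (add a (mul z' c)) (opp (add b (mul z' d))))) by ring.
rewrite e1 e2 in key.
have k0 : mul (add z (opp z')) (add c (opp d)) = zero by rewrite key; ring.
case: (inv _ w0) => v hv.
have : add z (opp z') = zero.
  have -> : add z (opp z') = mul (mul (add z (opp z')) (add c (opp d))) v.
    have -> : mul (mul (add z (opp z')) (add c (opp d))) v =
              mul (add z (opp z')) (mul (add c (opp d)) v) by ring.
    rewrite hv; ring.
  rewrite k0; ring.
move=> h; have -> : z = add (add z (opp z')) z' by ring.
rewrite h; ring.
Qed.

Lemma add_cancel_inj a b z c :
  add a (mul z c) = add b (mul z c) -> a = b.
Proof.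
move=> e.
have -> : a = add (add a (mul z c)) (opp (mul z c)) by ring.
rewrite e; ring.
Qed.

End Alg.

Section Transfer.
Variables (L : signature) (I : Type) (U : ultrafilter I) (M : I -> fin_struct L).
Variable a0 : elt M.

Lemma U_all1 (P : forall i, M i -> Prop) :
  (forall a : elt M, U (fun i => P i (a i))) -> U (fun i => forall x, P i x).
Proof. exact: (@U_choice I U (fun i => M i) a0 P). Qed.

Lemma U_all2 (P : forall i, M i -> M i -> Prop) :
  (forall a b : elt M, U (fun i => P i (a i) (b i))) -> U (fun i => forall x y, P i x y).
Proof.
move=> H; apply: (U_all1 (P := fun i x => forall y, P i x y)) => a.
exact: (U_all1 (P := fun i y => P i (a i) y)).
Qed.

Lemma U_all3 (P : forall i, M i -> M i -> M i -> Prop) :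
  (forall a b c : elt M, U (fun i => P i (a i) (b i) (c i))) -> U (fun i => forall x y z, P i x y z).
Proof.
move=> H; apply: (U_all1 (P := fun i x => forall y z, P i x y z)) => a.
exact: (U_all2 (P := fun i y z => P i (a i) y z)).
Qed.

Lemma addU_i (a b : elt M) i : addU a b i = addi (a i) (b i).
Proof. rewrite /addU /evalU /= /addi; congr fint; apply: functional_extensionality_dep => j; by case: ifP. Qed.
Lemma mulU_i (a b : elt M) i : mulU a b i = muli (a i) (b i).
Proof. rewrite /mulU /evalU /= /muli; congr fint; apply: functional_extensionality_dep => j; by case: ifP. Qed.
Lemma zeroU_i i : zeroU M i = zeroi (M i).
Proof. by []. Qed.
Lemma oneU_i i : oneU M i = onei (M i).
Proof. by []. Qed.

Lemma field_transfer : ultra_is_field U M ->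
  U (fun i => fieldish (@addi L (M i)) (@muli L (M i)) (zeroi (M i)) (onei (M i))).
Proof.
case=> A1 [A2 [A3 [A4 [M1 [M2 [M3 [D [Z Inv]]]]]]]].
have a1 : U (fun i => forall x y z, addi x (addi y z) = addi (addi x y) z :> M i).
  apply: (U_all3 (P := fun i x y z => addi x (addi y z) = addi (addi x y) z)) => a b c.
  by apply: (U_mono (A1 a b c)) => i; rewrite !addU_i.
have a2 : U (fun i => forall x y, addi x y = addi y x :> M i).
  apply: (U_all2 (P := fun i x y => addi x y = addi y x)) => a b.
  by apply: (U_mono (A2 a b)) => i; rewrite !addU_i.
have a3 : U (fun i => forall x, addi (zeroi (M i)) x = x).
  apply: (U_all1 (P := fun i x => addi (zeroi (M i)) x = x)) => a.
  by apply: (U_mono (A3 a)) => i; rewrite !addU_i.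
have a4 : U (fun i => forall x, exists y, addi x y = zeroi (M i)).
  apply: (U_all1 (P := fun i x => exists y, addi x y = zeroi (M i))) => a.
  case: (A4 a) => b hb; apply: (U_mono hb) => i; rewrite addU_i => h; by exists (b i).
have m1 : U (fun i => forall x y z, muli x (muli y z) = muli (muli x y) z :> M i).
  apply: (U_all3 (P := fun i x y z => muli x (muli y z) = muli (muli x y) z)) => a b c.
  by apply: (U_mono (M1 a b c)) => i; rewrite !mulU_i.
have m2 : U (fun i => forall x y, muli x y = muli y x :> M i).
  apply: (U_all2 (P := fun i x y => muli x y = muli y x)) => a b.
  by apply: (U_mono (M2 a b)) => i; rewrite !mulU_i.
have m3 : U (fun i => forall x, muli (onei (M i)) x = x).
  apply: (U_all1 (P := fun i x => muli (onei (M i)) x = x)) => a.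
  by apply: (U_mono (M3 a)) => i; rewrite !mulU_i.
have d : U (fun i => forall x y z, muli x (addi y z) = addi (muli x y) (muli x z) :> M i).
  apply: (U_all3 (P := fun i x y z => muli x (addi y z) = addi (muli x y) (muli x z))) => a b c.
  by apply: (U_mono (D a b c)) => i; rewrite !mulU_i !addU_i !mulU_i.
have z : U (fun i => zeroi (M i) <> onei (M i)) by apply/U_notP.
have inv : U (fun i => forall x, x <> zeroi (M i) -> exists y, muli x y = onei (M i)).
  apply: (U_all1 (P := fun i x => x <> zeroi (M i) -> exists y, muli x y = onei (M i))) => a.
  case: (pselect (eqU U a (zeroU M))) => h.
    by apply: (U_mono h) => i /= ->.
  case: (Inv a h) => b hb; apply: (U_mono hb) => i; rewrite mulU_i => e _; by exists (b i).
apply: (U_mono (U_and a1 (U_and a2 (U_and a3 (U_and a4 (U_and m1 (U_and m2 (U_and m3 (U_and d (U_and z inv)))))))))).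
by move=> i [? [? [? [? [? [? [? [? [? ?]]]]]]]]]; do 9 (split => //).
Qed.

End Transfer.

End C3.
Import C3.

Module C4.
Local Open Scope ring_scope.

Section Dims.
Variables (L : signature) (I : Type) (U : ultrafilter I) (M : I -> fin_struct L) (R : realType).
Hypothesis Hinf : forall N : nat, U (fun i => (N <= #|M i|)%N).

Definition Lq (i : I) : R := ln (#|M i|%:R : R).

Lemma ln_nat_ge0 (n : nat) : (0 < n)%N -> 0 <= ln (n%:R : R).
Proof. move=> h; apply: ln_ge0; by rewrite ler1n. Qed.

Lemma Lbig (c : R) : U (fun i => c <= Lq i).
Proof.
pose N := (Num.trunc (expR c)).+1.
apply: (U_mono (Hinf N)) => i hN.
have hN' : expR c < N%:R by exact: truncnS_gt.
rewrite /Lq -{1}(expRK c) ler_ln ?posrE ?expR_gt0 //.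
  apply: (le_trans (ltW hN')); by rewrite ler_nat.
by rewrite ltr0n (leq_trans _ hN).
Qed.

Lemma Lpos : U (fun i => 0 < Lq i).
Proof.
apply: (U_mono (Hinf 2)) => i h; apply: ln_gt0; by rewrite ltr1n.
Qed.

Definition Emp (s : I -> nat) := U (fun i => s i = 0%N).
Definition Dim (s : I -> nat) (k : nat) := forall e : R, 0 < e ->
  U (fun i => (0 < s i)%N /\ (k%:R - e) * Lq i <= ln ((s i)%:R : R) /\
              ln ((s i)%:R : R) <= (k%:R + e) * Lq i).

Lemma Emp_Dim s k : Emp s -> Dim s k -> False.
Proof.
move=> he hd; apply: (U_contra he); apply: (U_mono (hd 1 ltr01)) => i [h _] e.
by rewrite e in h.
Qed.

Lemma Dim_pos s k : Dim s k -> U (fun i => (0 < s i)%N).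
Proof. move=> hd; apply: (U_mono (hd 1 ltr01)) => i []//. Qed.

Lemma emp_add a b : Emp a -> Emp b -> Emp (fun i => a i + b i)%N.
Proof. move=> ha hb; apply: (U_mono (U_and ha hb)) => i [-> ->]. by []. Qed.

Lemma dim_add_emp a b k : Emp a -> Dim b k -> Dim (fun i => a i + b i)%N k.
Proof. move=> ha hb e he; apply: (U_mono (U_and ha (hb e he))) => i [-> H]. by rewrite add0n. Qed.

Lemma dim_emp_add a b k : Dim a k -> Emp b -> Dim (fun i => a i + b i)%N k.
Proof. move=> ha hb e he; apply: (U_mono (U_and hb (ha e he))) => i [-> H]. by rewrite addn0. Qed.

Lemma LbigM (e c : R) : 0 < e -> U (fun i => c <= e * Lq i).
Proof. move=> he; apply: (U_mono (Lbig (e^-1 * c))) => i; by rewrite ler_pdivrMl. Qed.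

Lemma ln_le (x y : nat) : (0 < x)%N -> (x <= y)%N -> ln (x%:R : R) <= ln (y%:R : R).
Proof. move=> hx hxy; rewrite ler_ln ?posrE ?ltr0n ?ler_nat //; exact: leq_trans hxy. Qed.

Lemma ln_sum_le (x y : nat) : (0 < x)%N -> (x <= y)%N ->
  ln ((x + y)%N%:R : R) <= ln (2%:R : R) + ln (y%:R : R).
Proof.
move=> hx hxy; have hy : (0 < y)%N by exact: leq_trans hxy.
rewrite -lnM ?posrE ?ltr0n // ler_ln ?posrE ?ltr0n ?mulr_gt0 ?ltr0n ?addn_gt0 ?hx //.
by rewrite -natrM ler_nat mul2n -addnn leq_add2r.
Qed.

Lemma dim_add a b k k' : Dim a k -> Dim b k' -> Dim (fun i => a i + b i)%N (maxn k k').
Proof.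
move=> ha hb e he.
have he2 : 0 < e / 2 by rewrite divr_gt0.
apply: (U_mono (U_and3 (LbigM (ln (2%:R : R)) he2) Lpos (U_and (ha _ he2) (hb _ he2)))).
move=> i [hl2 hL [[a0 [a1 a2]] [b0 [b1 b2]]]].
have sum_pos : (0 < (a i + b i)%N)%N by rewrite addn_gt0 a0.
split => //.
have lea := ln_le a0 (leq_addr (b i) (a i)).
have leb := ln_le b0 (leq_addl (a i) (b i)).
have kk : (k%:R : R) <= (maxn k k')%:R by rewrite ler_nat leq_maxl.
have kk' : (k'%:R : R) <= (maxn k k')%:R by rewrite ler_nat leq_maxr.
have l2 : 0 <= ln (2%:R : R) by apply: ln_nat_ge0.
split.
  case: (leqP k' k) => hkk.
    have hK : (maxn k k')%:R = k%:R :> R by congr (_%:R); apply/maxn_idPl.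
    nra.
  have hK : (maxn k k')%:R = k'%:R :> R by congr (_%:R); apply/maxn_idPr; exact: ltnW.
  nra.
case: (leqP (a i) (b i)) => hab.
  have := ln_sum_le a0 hab; nra.
have := ln_sum_le b0 (ltnW hab); rewrite addnC; nra.
Qed.

Lemma dim_scale (s S : I -> nat) (k d : nat) :
  (forall e : R, 0 < e -> U (fun i => ((s i)%:R : R) * expR ((d%:R - e) * Lq i) <= (S i)%:R /\
                                       ((S i)%:R : R) <= (s i)%:R * expR ((d%:R + e) * Lq i))) ->
  Dim s k -> Dim S (k + d).
Proof.
move=> H hs e he.
have he2 : 0 < e / 2 by rewrite divr_gt0.
apply: (U_mono (U_and3 Lpos (H _ he2) (hs _ he2))) => i [hL [h1 h2] [s0 [s1 s2]]].
have sp : (0 : R) < (s i)%:R by rewrite ltr0n.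
have Sp : (0 : R) < (S i)%:R by apply: lt_le_trans h1; rewrite mulr_gt0 ?expR_gt0.
have S0 : (0 < S i)%N by rewrite -(ltr0n R).
split => //.
have l1 : ln ((s i)%:R : R) + (d%:R - e / 2) * Lq i <= ln ((S i)%:R : R).
  by rewrite -[X in _ + X]expRK -lnM ?posrE ?expR_gt0 // ler_ln ?posrE ?mulr_gt0 ?expR_gt0.
have l2 : ln ((S i)%:R : R) <= ln ((s i)%:R : R) + (d%:R + e / 2) * Lq i.
  by rewrite -[X in _ <= _ + X]expRK -lnM ?posrE ?expR_gt0 // ler_ln ?posrE ?mulr_gt0 ?expR_gt0.
rewrite natrD; split; nra.
Qed.

Lemma emp_scale (s S : I -> nat) :
  U (fun i => (S i <= s i * #|M i|)%N) -> Emp s -> Emp S.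
Proof. move=> H hs; apply: (U_mono (U_and H hs)) => i [h e]; move: h; rewrite e mul0n; by case: (S i). Qed.

End Dims.

End C4.
Import C4.

Module C5.
Local Open Scope ring_scope.

Section St.
Variables (L : signature) (I : Type) (U : ultrafilter I) (M : I -> fin_struct L) (R : realType).
Hypothesis Hinf : forall N : nat, U (fun i => (N <= #|M i|)%N).
Variable a0 : elt M.

Definition ratioD (c : I -> nat) : I -> \bar R :=
  fun i => (lnE R (c i) * ((ln (#|M i|%:R : R))^-1)%:E)%E.

Lemma ratio_pos (c : I -> nat) i : 0 < Lq M R i -> (0 < c i)%N ->
  ratioD c i = (ln ((c i)%:R : R) / Lq M R i)%:E.
Proof. move=> hL hc; rewrite /ratioD /lnE; case: eqP => [e|_]; first by rewrite e in hc. by []. Qed.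

Lemma ratio_zero (c : I -> nat) i : 0 < Lq M R i -> c i = 0%N -> ratioD c i = -oo%E.
Proof.
move=> hL hc; rewrite /ratioD /lnE hc eqxx gt0_mulNye //.
by rewrite lte_fin invr_gt0.
Qed.

Lemma st_of_Dim c k : Dim U M R c k -> stU U (ratioD c) (k%:R)%:E.
Proof.
move=> hd eps he /=.
have he2 : 0 < eps / 2 by rewrite divr_gt0.
apply: (U_mono (U_and (Lpos R Hinf) (hd _ he2))) => i [hL [c0 [c1 c2]]].
exists (ln ((c i)%:R : R) / Lq M R i); split; first exact: ratio_pos.
set y := ln _ / _.
have hy : ln ((c i)%:R : R) = y * Lq M R i by rewrite /y divfK // gt_eqF.
rewrite hy in c1 c2.
rewrite ltr_norml; apply/andP; split; nra.
Qed.

Lemma st_of_Emp c : Emp U c -> stU U (ratioD c) -oo%E.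
Proof.
move=> he c0 /=; apply: (U_mono (U_and (Lpos R Hinf) he)) => i [hL hc].
by rewrite ratio_zero // ltNyr.
Qed.

Lemma stU_congr (x y : I -> \bar R) r : U (fun i => x i = y i) -> stU U x r -> stU U y r.
Proof.
move=> hxy; case: r => [r| |] /= H.
- move=> e he; apply: (U_mono (U_and hxy (H e he))) => i [-> //].
- move=> c; apply: (U_mono (U_and hxy (H c))) => i [-> //].
- move=> c; apply: (U_mono (U_and hxy (H c))) => i [-> //].
Qed.

Lemma stU_fin_fin (x : I -> \bar R) r0 r1 : stU U x r0%:E -> stU U x r1%:E -> r0 < r1 -> False.
Proof.
move=> /= h0 h1 hlt.
have he : 0 < (r1 - r0) / 2 by rewrite divr_gt0 // subr_gt0.
apply: (uf_not0 (u:=U)); apply: (U_mono (U_and (h0 _ he) (h1 _ he))).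
move=> i [[y [ey hy]] [y' [ey' hy']]]; move: ey'; rewrite ey => -[eyy]; subst y'.
move: hy hy'; rewrite !ltr_norml => /andP[h2 h3] /andP[h4 h5]; clear -h2 h3 h4 h5; lra.
Qed.

Lemma stU_fin_inf (x : I -> \bar R) r0 : stU U x r0%:E -> stU U x +oo%E -> False.
Proof.
move=> /= h0 h1.
apply: (uf_not0 (u:=U)); apply: (U_mono (U_and (h0 _ ltr01) (h1 (r0 + 1)))).
move=> i [[y [ey hy]] hc]; move: hc; rewrite ey lte_fin => hc.
move: hy; rewrite ltr_norml => /andP[h2 h3]; clear -hc h2 h3; lra.
Qed.

Lemma stU_fin_ninf (x : I -> \bar R) r0 : stU U x r0%:E -> stU U x -oo%E -> False.
Proof.
move=> /= h0 h1.
apply: (uf_not0 (u:=U)); apply: (U_mono (U_and (h0 _ ltr01) (h1 (r0 - 1)))).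
move=> i [[y [ey hy]] hc]; move: hc; rewrite ey lte_fin => hc.
move: hy; rewrite ltr_norml => /andP[h2 h3]; clear -hc h2 h3; lra.
Qed.

Lemma stU_inf_ninf (x : I -> \bar R) : stU U x +oo%E -> stU U x -oo%E -> False.
Proof.
move=> /= h0 h1.
apply: (uf_not0 (u:=U)); apply: (U_mono (U_and (h0 0) (h1 0))).
move=> i [a b]; have := lt_trans a b; by rewrite ltxx.
Qed.

Lemma stU_unique (x : I -> \bar R) r r' : stU U x r -> stU U x r' -> r = r'.
Proof.
case: r => [r| |]; case: r' => [r'| |] h h'.
- case: (ltgtP r r') => [hl|hl|->//]; exfalso; [exact: (stU_fin_fin h h') | exact: (stU_fin_fin h' h)].
- by exfalso; exact: (stU_fin_inf h h').
- by exfalso; exact: (stU_fin_ninf h h').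
- by exfalso; exact: (stU_fin_inf h' h).
- by [].
- by exfalso; exact: (stU_inf_ninf h h').
- by exfalso; exact: (stU_fin_ninf h' h).
- by exfalso; exact: (stU_inf_ninf h' h).
- by [].
Qed.

Lemma rep_unique n (A : ('I_n -> elt M) -> Prop) D D' :
  represents U A D -> represents U A D' -> U (fun i => D i = D' i).
Proof.
move=> h h'.
have H := @U_choice I U (fun i => {ffun 'I_n -> M i}) (fun i => [ffun _ => a0 i])
   (fun i t => (t \in D i) = (t \in D' i)).
have : U (fun i => forall t, (t \in D i) = (t \in D' i)).
  apply: H => a.
  pose x : 'I_n -> elt M := fun k i => a i k.
  have ex : forall i, [ffun k => x k i] = a i by move=> i; apply/ffunP => k; rewrite ffunE.
  have e1 : A x <-> U (fun i => a i \in D i).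
    rewrite h; split => hh; apply: (U_mono hh) => i; by rewrite ex.
  have e2 : A x <-> U (fun i => a i \in D' i).
    rewrite h'; split => hh; apply: (U_mono hh) => i; by rewrite ex.
  case: (uf_ultra U (fun i => a i \in D i)) => hD.
    have hD' : U (fun i => a i \in D' i) by apply/e2/e1.
    by apply: (U_mono (U_and hD hD')) => i [-> ->].
  have hD' : U (fun i => ~ (a i \in D' i)).
    apply/U_notP => /e2 /e1 hh; exact: (U_contra hh hD).
  by apply: (U_mono (U_and hD hD')) => i [/negP/negbTE -> /negP/negbTE ->].
by move=> H2; apply: (U_mono H2) => i Hi; apply/setP => t; rewrite Hi.
Qed.

Definition cardD n (D : forall i, {set {ffun 'I_n -> M i}}) : I -> nat := fun i => #|D i|.

Lemma delta_of n (A : ('I_n -> elt M) -> Prop) D r :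
  represents U A D -> stU U (ratioD (cardD D)) r -> delta U R A = r.
Proof.
move=> hD hst; rewrite /delta; case: xgetP => [x _ [D' [hD' hst']] | hne].
  apply: (stU_unique _ hst).
  apply: (stU_congr _ hst'); apply: (U_mono (rep_unique hD' hD)) => i e.
  by rewrite /ratioD /cardD e.
by exfalso; apply: (hne r); exists D.
Qed.

Lemma delta_st n (A : ('I_n -> elt M) -> Prop) D :
  represents U A D -> delta U R A <> -oo%E -> stU U (ratioD (cardD D)) (delta U R A).
Proof.
move=> hD; rewrite /delta; case: xgetP => [x _ [D' [hD' hst']] | hne] //.
move=> _; apply: (stU_congr _ hst'); apply: (U_mono (rep_unique hD' hD)) => i e.
by rewrite /cardD e.
Qed.

End St.

End C5.
Import C5.

Module C6.

Lemma cardP_sum (T : finType) (P : pred T) : #|[set x | P x]| = \sum_x (P x : nat).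
Proof. rewrite -sum1_card big_mkcond; apply: eq_bigr => x _; rewrite inE; by case: (P x). Qed.

Definition consff (T : finType) n (p : T * {ffun 'I_n -> T}) : {ffun 'I_n.+1 -> T} :=
  [ffun j => if unlift ord0 j is Some j' then p.2 j' else p.1].

Lemma count_split (T : finType) n (P : T -> {ffun 'I_n -> T} -> bool) :
  #|[set t : {ffun 'I_n.+1 -> T} | P (t ord0) [ffun j => t (lift ord0 j)]]| =
  \sum_(g : {ffun 'I_n -> T}) #|[set x | P x g]|.
Proof.
transitivity (\sum_(g : {ffun 'I_n -> T}) \sum_x (P x g : nat)); last first.
  by apply: eq_bigr => g _; rewrite (cardP_sum (fun x => P x g)).
rewrite cardP_sum.
rewrite exchange_big pair_big /=.
have hb : {on [pred t | true], bijective (@consff T n)}.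
  apply: onW_bij.
  exists (fun t : {ffun 'I_n.+1 -> T} => (t ord0, [ffun j => t (lift ord0 j)])).
    case=> x g; rewrite /consff /= ffunE unlift_none; congr pair.
    by apply/ffunP => j; rewrite !ffunE liftK.
  move=> t; apply/ffunP => j; rewrite /consff ffunE /=.
  by case: unliftP => [j' ->|->]; rewrite ?ffunE.
rewrite (reindex (@consff T n) hb) /=; apply: eq_bigr => -[x g] _ /=.
rewrite /consff ffunE unlift_none /=; congr (nat_of_bool (P _ _)).
by apply/ffunP => j; rewrite !ffunE liftK.
Qed.

End C6.
Import C6.

Module C7.
Local Open Scope ring_scope.

Lemma asbool_iff (P Q : Prop) : (P <-> Q) -> `[< P >] = `[< Q >].
Proof. by move=> H; rewrite (propext H). Qed.

Definition sig (N w s : nat) : nat -> nat :=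
  fun k => match k with 0 => w | k'.+1 => if (k' < N)%N then k' else (k' + s)%N end.

Lemma sig_inj N w s : (N <= w < N + s)%N -> injective (sig N w s).
Proof.
move=> /andP[h1 h2] [|x] [|y] //=.
- case: ifP => hy e; lia.
- case: ifP => hx e; lia.
- case: ifP => hx; case: ifP => hy e; congr S; lia.
Qed.

Lemma sati_extI L (S : fin_struct L) (e e' : nat -> S) p :
  (forall k, e k = e' k) -> sati e p -> sati e' p.
Proof. by move=> H; rewrite (sati_ext p H). Qed.

Section Main.
Variables (L : signature) (I : Type) (U : ultrafilter I) (M : I -> fin_struct L) (R : realType).
Variable a0 : elt M.

Definition rho m (b : 'I_m -> elt M) (i : I) : nat -> M i :=
  tenv (fun j => b j i) (fun _ => zeroi (M i)).

Definition Dset (i : I) n (phi : formula L) (r : nat -> M i) : {set {ffun 'I_n -> M i}} :=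
  [set t : {ffun 'I_n -> M i} | `[< sati (tenv (fun j => t j) r) phi >]].

Definition cnt n m (phi : formula L) (b : 'I_m -> elt M) : I -> nat :=
  fun i => #|Dset n phi (rho b i)|.

Lemma cmp_env n m (a : 'I_n -> elt M) (b : 'I_m -> elt M) i :
  cmp (tup_env a (tup_env b (fun _ => zeroU M))) i = tenv (fun j => a j i) (rho b i).
Proof. by rewrite !tup_envE cmp_tenv cmp_tenv. Qed.

Lemma cmp_env0 m (b : 'I_m -> elt M) i :
  cmp (tup_env b (fun _ => zeroU M)) i = rho b i.
Proof. by rewrite tup_envE cmp_tenv. Qed.

Lemma phiset_los n m (phi : formula L) (b : 'I_m -> elt M) a :
  phiset U n phi b a <-> U (fun i => sati (tenv (fun j => a j i) (rho b i)) phi).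
Proof.
rewrite /phiset (los U a0); split => H; apply: (U_mono H) => i; by rewrite cmp_env.
Qed.

Lemma zdef_los m (chi : formula L) (b : 'I_m -> elt M) :
  zdef U chi b <-> U (fun i => sati (rho b i) chi).
Proof.
rewrite /zdef (los U a0); split => H; apply: (U_mono H) => i; by rewrite cmp_env0.
Qed.

Lemma rep_phiset n m (phi : formula L) (b : 'I_m -> elt M) :
  represents U (phiset U n phi b) (fun i => Dset n phi (rho b i)).
Proof.
move=> a; rewrite phiset_los; split => H; apply: (U_mono H) => i.
  move=> h; rewrite inE; apply/asboolP; move: h; apply: sati_extI => k.
  by apply: tenv_ext => // j; rewrite ffunE.
rewrite inE => /asboolP; apply: sati_extI => k.
by apply: tenv_ext => // j; rewrite ffunE.
Qed.

Lemma delta_cnt n m (phi : formula L) (b : 'I_m -> elt M) r :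
  stU U (ratioD M R (cnt n phi b)) r -> delta U R (phiset U n phi b) = r.
Proof. move=> h; exact: (delta_of a0 (rep_phiset (n:=n) phi b) h). Qed.

Lemma cnt_st n m (phi : formula L) (b : 'I_m -> elt M) :
  delta U R (phiset U n phi b) <> -oo%E ->
  stU U (ratioD M R (cnt n phi b)) (delta U R (phiset U n phi b)).
Proof. move=> h; exact: (delta_st a0 (rep_phiset (n:=n) phi b) h). Qed.



Lemma updi_eq T (e : nat -> T) v x : updi e v x v = x.
Proof. by rewrite /updi eqxx. Qed.
Lemma updi_ne T (e : nat -> T) v x k : k != v -> updi e v x k = e k.
Proof. by rewrite /updi => /negbTE ->. Qed.

Lemma sati_and (S : fin_struct L) (e : nat -> S) p q : sati e (fand p q) = (sati e p /\ sati e q).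
Proof. by []. Qed.
Lemma sati_not (S : fin_struct L) (e : nat -> S) p : sati e (fnot p) = ~ sati e p.
Proof. by []. Qed.
Lemma sati_feq (S : fin_struct L) (e : nat -> S) t1 t2 : sati e (feq t1 t2) = (evalt e t1 = evalt e t2).
Proof. by []. Qed.

Section Forms.
Variables (N : nat) (phi : formula L).

Definition Exf := fex N (renf (sig N N 1) phi).
Definition tv k := tvar L k.
Definition bodyf :=
  fand (renf (sig N N.+1 5) phi) (fand (renf (sig N N.+2 5) phi)
  (fand (renf (sig N N.+3 5) phi) (fand (renf (sig N N.+4 5) phi)
  (fand (fnot (fand (feq (tv N.+1) (tv N.+2)) (feq (tv N.+3) (tv N.+4))))
        (feq (tadd (tv N.+1) (tmul (tv N) (tv N.+3))) (tadd (tv N.+2) (tmul (tv N) (tv N.+4)))))))).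
Definition critf := f_all N (fex N.+1 (fex N.+2 (fex N.+3 (fex N.+4 bodyf)))).

Variables (S : fin_struct L) (e : nat -> S).
Hypothesis Hb : forall k, (N <= k)%N -> e k = zeroi S.

Lemma ren_ins w s (x : S) (e' : nat -> S) : (N <= w < N + s)%N -> e' w = x ->
  (forall k, (k < N)%N -> e' k = e k) -> (forall k, (N <= k)%N -> e' (k + s)%N = zeroi S) ->
  sati e' (renf (sig N w s) phi) <-> sati (cons_env x e) phi.
Proof.
move=> hw E1 E2 E3; rewrite sati_ren; last exact: sig_inj.
apply: sati_ext => -[|k] //=; case: ifP => h; first by rewrite E2.
by rewrite E3 ?Hb //; lia.
Qed.

Definition Xf (x : S) := sati (cons_env x e) phi.

Lemma sem_ex : sati e Exf <-> exists x, Xf x.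
Proof.
rewrite /Exf /=; split; case=> x H; exists x; move: H; rewrite (@ren_ins N 1 x) //;
  rewrite ?updi_eq //; try lia.
- by move=> k hk; rewrite updi_ne //; lia.
- by move=> k hk; rewrite updi_ne ?Hb //; lia.
- by move=> k hk; rewrite updi_ne //; lia.
- by move=> k hk; rewrite updi_ne ?Hb //; lia.
Qed.

Lemma sem_crit : sati e critf <-> forall z, exists a b c d,
  [/\ Xf a, Xf b, Xf c, Xf d & ~ (a = b /\ c = d) /\ addi a (muli z c) = addi b (muli z d)].
Proof.
rewrite /critf sati_all.
have E : forall z a b c d, let e5 := updi (updi (updi (updi (updi e N z) N.+1 a) N.+2 b) N.+3 c) N.+4 d in
  sati e5 bodyf <-> [/\ Xf a, Xf b, Xf c, Xf d & ~ (a = b /\ c = d) /\ addi a (muli z c) = addi b (muli z d)].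
  move=> z a b c d e5.
  have v0 : e5 N = z by rewrite /e5 (updi_ne _ _ (_ : N != N.+4)) ?(updi_ne _ _ (_ : N != N.+3)) ?(updi_ne _ _ (_ : N != N.+2)) ?(updi_ne _ _ (_ : N != N.+1)) ?updi_eq //; lia.
  have v1 : e5 N.+1 = a by rewrite /e5 (updi_ne _ _ (_ : N.+1 != N.+4)) ?(updi_ne _ _ (_ : N.+1 != N.+3)) ?(updi_ne _ _ (_ : N.+1 != N.+2)) ?updi_eq //; lia.
  have v2 : e5 N.+2 = b by rewrite /e5 (updi_ne _ _ (_ : N.+2 != N.+4)) ?(updi_ne _ _ (_ : N.+2 != N.+3)) ?updi_eq //; lia.
  have v3 : e5 N.+3 = c by rewrite /e5 (updi_ne _ _ (_ : N.+3 != N.+4)) ?updi_eq //; lia.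
  have v4 : e5 N.+4 = d by rewrite /e5 updi_eq.
  have vlo : forall k, (k < N)%N -> e5 k = e k by move=> k hk; rewrite /e5 !updi_ne //; lia.
  have vhi : forall k, (N <= k)%N -> e5 (k + 5)%N = zeroi S.
    by move=> k hk; rewrite /e5 !updi_ne ?Hb //; lia.
  rewrite /bodyf !sati_and sati_not sati_and !sati_feq !evalt_add !evalt_mul /= v0 v1 v2 v3 v4.
  rewrite (@ren_ins N.+1 5 a) //; last by lia.
  rewrite (@ren_ins N.+2 5 b) //; last by lia.
  rewrite (@ren_ins N.+3 5 c) //; last by lia.
  rewrite (@ren_ins N.+4 5 d) //; last by lia.
  rewrite /Xf; split; first by case=> ? [? [? [? [? ?]]]]; split.
  by case=> ? ? ? ? [? ?]; do 5 (split => //).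
split.
  move=> H z; have [a [b [c [d h]]]] : exists a b c d, sati (updi (updi (updi (updi (updi e N z) N.+1 a) N.+2 b) N.+3 c) N.+4 d) bodyf.
    by case: (H z) => a [b [c [d h]]]; exists a, b, c, d.
  by exists a, b, c, d; move: h; rewrite E.
move=> H z; case: (H z) => a [b [c [d h]]]; exists a, b, c, d; by rewrite E.
Qed.

End Forms.
End Main.

End C7.
Import C7.

Module C8.

Section Comp.
Variables (L : signature) (S : fin_struct L).

Definition Xs (e : nat -> S) (phi : formula L) : {set S} :=
  [set x | `[< sati (cons_env x e) phi >]].

Lemma inXs e phi x : (x \in Xs e phi) <-> Xf phi e x.
Proof. rewrite inE; split => /asboolP //. Qed.

Definition critP (e : nat -> S) phi : Prop := forall z, exists a b c d,
  [/\ Xf phi e a, Xf phi e b, Xf phi e c, Xf phi e d & ~ (a = b /\ c = d) /\ addi a (muli z c) = addi b (muli z d)].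

Lemma crit_big e phi : fieldish (@addi L S) (@muli L S) (zeroi S) (onei S) ->
  critP e phi -> (#|S| <= #|Xs e phi| ^ 4)%N.
Proof.
move=> F Hc.
have Hc' : forall z, exists p : S * S * S * S,
   [/\ Xf phi e p.1.1.1, Xf phi e p.1.1.2, Xf phi e p.1.2, Xf phi e p.2 &
       ~ (p.1.1.1 = p.1.1.2 /\ p.1.2 = p.2) /\ addi p.1.1.1 (muli z p.1.2) = addi p.1.1.2 (muli z p.2)].
  move=> z; case: (Hc z) => a [b [c [d h]]]; by exists (a, b, c, d).
pose f z := proj1_sig (cid (Hc' z)).
have fP : forall z, let p := f z in [/\ Xf phi e p.1.1.1, Xf phi e p.1.1.2, Xf phi e p.1.2, Xf phi e p.2 &
       ~ (p.1.1.1 = p.1.1.2 /\ p.1.2 = p.2) /\ addi p.1.1.1 (muli z p.1.2) = addi p.1.1.2 (muli z p.2)].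
  by move=> z; rewrite /f; case: (cid _).
have finj : injective f.
  move=> z z' e1.
  have [_ _ _ _ [n1 q1]] := fP z; have [_ _ _ _ [n2 q2]] := fP z'.
  rewrite e1 in n1 q1.
  apply: (field_uniq F q1 q2).
  case: (pselect ((f z').1.1.1 = (f z').1.1.2)) => h; last by left.
  by right => h'; apply: n2.
have -> : #|S| = #|f @: [set: S]| by rewrite card_imset // cardsT.
have -> : (#|Xs e phi| ^ 4 = #|finset.setX (finset.setX (finset.setX (Xs e phi) (Xs e phi)) (Xs e phi)) (Xs e phi)|)%N.
  by rewrite !cardsX; rewrite -!mulnA; rewrite /expn /=; lia.
apply: subset_leq_card; apply/fintype.subsetP => p /imsetP [z _ ->].
have [h1 h2 h3 h4 _] := fP z.
by rewrite !inE; apply/andP; split; [apply/andP; split; [apply/andP; split|]|]; apply/asboolP.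
Qed.

Lemma noncrit_small e phi : ~ critP e phi -> (#|Xs e phi| ^ 2 <= #|S|)%N.
Proof.
move=> /existsNP [z Hz].
pose g (p : S * S) := addi p.1 (muli z p.2).
have ginj : {in finset.setX (Xs e phi) (Xs e phi) &, injective g}.
  move=> [a c] [b d]; rewrite !finset.in_setX => /andP[ha hc] /andP[hb hd] eg.
  case: (pselect (a = b /\ c = d)) => [[-> ->]//|hne].
  exfalso; apply: Hz; exists a, b, c, d; split; try by apply/inXs.
  by split.
rewrite expnS expn1 -cardsX -(card_in_imset ginj); exact: max_card.
Qed.

Lemma count1 (T : finType) (P : T -> bool) :
  #|[set t : {ffun 'I_1 -> T} | P (t ord0)]| = #|[set x | P x]|.
Proof.
have inj : injective (fun x : T => [ffun _ : 'I_1 => x]).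
  by move=> x y /ffunP /(_ ord0); rewrite !ffunE.
rewrite -(card_imset _ inj); apply: eq_card => t; rewrite inE.
apply/idP/imsetP.
  move=> h; exists (t ord0); first by rewrite inE.
  by apply/ffunP => j; rewrite ffunE (ord1 j).
by case=> x; rewrite inE => hx ->; rewrite ffunE.
Qed.

End Comp.

End C8.
Import C8.

Module C9.
Local Open Scope ring_scope.

Lemma sum_bounds (R : realType) (G : finType) (P : pred G) (f : G -> nat) (lo hi : R) :
  (forall g, P g -> lo <= (f g)%:R /\ (f g)%:R <= hi) ->
  (#|[set g | P g]|%:R * lo <= (\sum_g (P g * f g)%N)%:R) /\
  ((\sum_g (P g * f g)%N)%:R <= #|[set g | P g]|%:R * hi).
Proof.
move=> H; rewrite cardP_sum !natr_sum !mulr_suml; split; apply: ler_sum => g _;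
  case hg: (P g) => /=; rewrite ?mul1n ?mul0n ?mul1r ?mul0r //; by case: (H g hg).
Qed.

Section Step.
Variables (L : signature) (I : Type) (U : ultrafilter I) (M : I -> fin_struct L) (R : realType).
Variable a0 : elt M.
Hypothesis Hinf : forall N : nat, U (fun i => (N <= #|M i|)%N).
Hypothesis HF : U (fun i => fieldish (@addi L (M i)) (@muli L (M i)) (zeroi (M i)) (onei (M i))).
Hypothesis Hyp : forall (m : nat) (phi : formula L) (b : 'I_m -> elt M),
  (exists a, phiset U 1 phi b a) ->
  delta U R (phiset U 1 phi b) = 0%E \/ delta U R (phiset U 1 phi b) = 1%E.

Lemma choose_elt (P : forall i, M i -> Prop) :
  U (fun i => exists y, P i y) -> exists a : elt M, U (fun i => P i (a i)).
Proof.
move=> H.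
pose a i := match pselect (exists y, P i y) with left h => proj1_sig (cid h) | right _ => a0 i end.
exists a; apply: (U_mono H) => i hi; rewrite /a; case: pselect => [h|h].
  by case: (cid h).
by exfalso; apply: h.
Qed.

Lemma st_fin_bounds (c : I -> nat) (r : R) : stU U (ratioD M R c) r%:E ->
  forall eps, 0 < eps -> U (fun i => (0 < c i)%N /\ (r - eps) * Lq M R i < ln ((c i)%:R : R) /\
                               ln ((c i)%:R : R) < (r + eps) * Lq M R i).
Proof.
move=> /= H eps he; apply: (U_mono (U_and (Lpos R Hinf) (H eps he))) => i [hL [y [ey hy]]].
have c0 : (0 < c i)%N.
  case: (posnP (c i)) => // e0; by rewrite (ratio_zero hL e0) in ey.
split => //.
rewrite (ratio_pos hL c0) in ey; case: ey => ey.
have hy' : ln ((c i)%:R : R) = y * Lq M R i by rewrite -ey divfK // gt_eqF.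
rewrite hy'; move: hy; rewrite ltr_norml => /andP[h1 h2]; split; nra.
Qed.

Variables (n m : nat) (phi : formula L) (b : 'I_m -> elt M).

Definition P0f := fand (Exf (n + m) phi) (fnot (critf (n + m) phi)).
Definition P1f := fand (Exf (n + m) phi) (critf (n + m) phi).

Definition bp (x : 'I_n -> elt M) : 'I_(n + m) -> elt M :=
  fun j => tup_env x (tup_env b (fun _ => zeroU M)) j.

Lemma rho_bp x i k : rho (bp x) i k = tenv (fun j => x j i) (rho b i) k.
Proof.
rewrite /rho -tenv_cat; apply: tenv_ext => // j.
by rewrite /bp -/(cmp _ i j) cmp_env.
Qed.

Lemma env_bound i (g : 'I_n -> M i) k : (n + m <= k)%N -> tenv g (rho b i) k = zeroi (M i).
Proof.
move=> h; rewrite tenv_ge; last by lia.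
by rewrite /rho tenv_ge; last by lia.
Qed.

Definition fib i (g : 'I_n -> M i) : nat := #|Xs (tenv g (rho b i)) phi|.

Lemma cnt_fiber x i : cnt 1 phi (bp x) i = fib (fun j => x j i).
Proof.
rewrite /cnt /Dset /fib /Xs.
rewrite -(count1 (fun y => `[< sati (cons_env y (tenv (fun j => x j i) (rho b i))) phi >])).
apply: eq_card => t; rewrite !inE; apply: asbool_iff; apply: sati_ext => k.
by rewrite tenvS; case: k => [|k] //=; rewrite tenv0 rho_bp.
Qed.

Lemma cnt_succ i : cnt n.+1 phi b i = (\sum_(g : {ffun 'I_n -> M i}) fib (fun j => g j))%N.
Proof.
rewrite /cnt /Dset /fib /Xs.
rewrite -(count_split (fun y (g : {ffun 'I_n -> M i}) =>
     `[< sati (cons_env y (tenv (fun j => g j) (rho b i))) phi >])).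
apply: eq_card => t; rewrite !inE; apply: asbool_iff; apply: sati_ext => k.
rewrite tenvS; case: k => [|k] //=; apply: tenv_ext => // j; by rewrite ffunE.
Qed.

Lemma sem_P i (g : 'I_n -> M i) :
  (sati (tenv g (rho b i)) P0f <-> (0 < fib g)%N /\ ~ critP (tenv g (rho b i)) phi) /\
  (sati (tenv g (rho b i)) P1f <-> (0 < fib g)%N /\ critP (tenv g (rho b i)) phi).
Proof.
have hb := @env_bound i g.
have hex : sati (tenv g (rho b i)) (Exf (n + m) phi) <-> (0 < fib g)%N.
  rewrite sem_ex //; split.
    by case=> y hy; rewrite /fib card_gt0; apply/set0Pn; exists y; apply/inXs.
  by rewrite /fib card_gt0 => /set0Pn [y /inXs hy]; exists y.
rewrite /P0f /P1f sati_and sati_not sati_and hex.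
by rewrite (sem_crit phi hb).
Qed.

Lemma fib_split i (g : 'I_n -> M i) :
  fib g = (`[< sati (tenv g (rho b i)) P0f >] * fib g + `[< sati (tenv g (rho b i)) P1f >] * fib g)%N.
Proof.
have [h0 h1] := sem_P g.
case: (posnP (fib g)) => [->|hp]; first by rewrite !muln0.
case: (pselect (critP (tenv g (rho b i)) phi)) => hc.
  have -> : `[< sati (tenv g (rho b i)) P0f >] = false by apply/asboolP; rewrite h0 => -[].
  have -> : `[< sati (tenv g (rho b i)) P1f >] = true by apply/asboolP; rewrite h1.
  by rewrite mul0n mul1n.
have -> : `[< sati (tenv g (rho b i)) P0f >] = true by apply/asboolP; rewrite h0.
have -> : `[< sati (tenv g (rho b i)) P1f >] = false by apply/asboolP; rewrite h1 => -[].
by rewrite mul0n mul1n addn0.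
Qed.

End Step.

End C9.
Import C9.

Module C10.
Local Open Scope ring_scope.

Section Step2.
Variables (L : signature) (I : Type) (U : ultrafilter I) (M : I -> fin_struct L) (R : realType).
Variable a0 : elt M.
Hypothesis Hinf : forall N : nat, U (fun i => (N <= #|M i|)%N).
Hypothesis HF : U (fun i => fieldish (@addi L (M i)) (@muli L (M i)) (zeroi (M i)) (onei (M i))).
Hypothesis Hyp : forall (m : nat) (phi : formula L) (b : 'I_m -> elt M),
  (exists a, phiset U 1 phi b a) ->
  delta U R (phiset U 1 phi b) = 0%E \/ delta U R (phiset U 1 phi b) = 1%E.
Variables (n m : nat) (phi : formula L) (b : 'I_m -> elt M).

Definition ex_env (x : 'I_n -> elt M) := tup_env x (tup_env b (fun _ => zeroU M)).

Lemma Ulos (x : 'I_n -> elt M) P : satU U (ex_env x) P <-> U (fun i => sati (tenv (fun j => x j i) (rho b i)) P).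
Proof. rewrite /ex_env (los U a0); split => H; apply: (U_mono H) => i; by rewrite cmp_env. Qed.

Lemma fiber_ne (x : 'I_n -> elt M) : U (fun i => (0 < fib phi b (fun j => x j i))%N) ->
  exists a, phiset U 1 phi (bp b x) a.
Proof.
move=> H.
have [a' ha'] : exists a' : elt M, U (fun i => Xf phi (tenv (fun j => x j i) (rho b i)) (a' i)).
  apply: (choose_elt a0 (P := fun i y => Xf phi (tenv (fun j => x j i) (rho b i)) y)); apply: (U_mono H) => i.
  by rewrite /fib card_gt0 => /set0Pn [y /inXs hy]; exists y.
exists (fun _ => a'); apply/(phiset_los U a0 phi (bp b x) (fun _ => a')); apply: (U_mono ha') => i; rewrite /Xf.
apply: sati_extI => k; rewrite tenvS; case: k => [|k] //=; by rewrite tenv0 rho_bp.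
Qed.

Lemma Lq_card i : Lq M R i = ln (#|M i|%:R : R).
Proof. by []. Qed.

Lemma fiber_P1 (x : 'I_n -> elt M) : satU U (ex_env x) (P1f n m phi) ->
  forall eps, 0 < eps -> U (fun i => (1 - eps) * Lq M R i < ln ((fib phi b (fun j => x j i))%:R : R)).
Proof.
move=> /Ulos H.
have H' : U (fun i => (0 < fib phi b (fun j => x j i))%N /\ critP (tenv (fun j => x j i) (rho b i)) phi).
  by apply: (U_mono H) => i /(proj2 (sem_P _ _ _)).
have ne := fiber_ne (U_mono H' (fun i h => proj1 h)).
case: (Hyp ne) => hd.
  exfalso.
  have hne : delta U R (phiset U 1 phi (bp b x)) <> -oo%E by rewrite hd.
  have st := cnt_st a0 hne.
  rewrite hd in st.
  have hb := st_fin_bounds Hinf st (ltac:(lra) : (0 : R) < 1/8).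
  apply: (uf_not0 (u:=U)).
  apply: (U_mono (U_and3 hb (U_and H' HF) (Lpos R Hinf))) => i [[c0 [c1 c2]] [[f0 hc] hF] hL].
  have big := crit_big hF hc.
  rewrite cnt_fiber in c0 c1 c2.
  have qpos : (0 < #|M i|)%N by apply: (leq_trans f0); exact: max_card.
  have := ln_le R qpos big.
  rewrite natrX lnXn ?ltr0n // -/(Lq M R i) => hh.
  move: c2 hh; rewrite /fib; set lc := ln _; move=> c2 hh.
  have : 4 * lc < Lq M R i by lra.
  rewrite -mulr_natr in hh; lra.
move=> eps he.
have hne : delta U R (phiset U 1 phi (bp b x)) <> -oo%E by rewrite hd.
  have st := cnt_st a0 hne.
rewrite hd in st.
apply: (U_mono (st_fin_bounds Hinf st he)) => i [_ [c1 _]].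
by rewrite cnt_fiber in c1.
Qed.


Lemma fiber_P0 (x : 'I_n -> elt M) : satU U (ex_env x) (P0f n m phi) ->
  forall eps, 0 < eps -> U (fun i => ln ((fib phi b (fun j => x j i))%:R : R) < eps * Lq M R i).
Proof.
move=> /Ulos H.
have H' : U (fun i => (0 < fib phi b (fun j => x j i))%N /\ ~ critP (tenv (fun j => x j i) (rho b i)) phi).
  by apply: (U_mono H) => i /(proj1 (sem_P _ _ _)).
have ne := fiber_ne (U_mono H' (fun i h => proj1 h)).
case: (Hyp ne) => hd; last first.
  exfalso.
  have hne : delta U R (phiset U 1 phi (bp b x)) <> -oo%E by rewrite hd.
  have st := cnt_st a0 hne.
  rewrite hd in st.
  have hb := st_fin_bounds Hinf st (ltac:(lra) : (0 : R) < 1/4).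
  apply: (uf_not0 (u:=U)).
  apply: (U_mono (U_and3 hb H' (Lpos R Hinf))) => i [[c0 [c1 c2]] [f0 hc] hL].
  have small := noncrit_small hc.
  rewrite cnt_fiber in c0 c1 c2.
  have := ln_le R (ltac:(by rewrite expn_gt0 f0) : (0 < fib phi b (fun j => x j i) ^ 2)%N) small.
  rewrite natrX lnXn ?ltr0n // -/(Lq M R i) => hh.
  move: c1 hh; rewrite /fib; set lc := ln _; move=> c1 hh.
  rewrite -mulr_natr in hh; clear -c1 hh hL; lra.
move=> eps he.
have hne : delta U R (phiset U 1 phi (bp b x)) <> -oo%E by rewrite hd.
have st := cnt_st a0 hne.
rewrite hd in st.
apply: (U_mono (st_fin_bounds Hinf st he)) => i [_ [_ c2]].
by rewrite cnt_fiber add0r in c2.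
Qed.

Lemma over1 eps : 0 < eps -> U (fun i => forall g : {ffun 'I_n -> M i},
  sati (tenv (fun j => g j) (rho b i)) (P1f n m phi) ->
  (1 - eps) * Lq M R i < ln ((fib phi b (fun j => g j))%:R : R)).
Proof.
move=> he.
apply: (U_choice (T := fun i => {ffun 'I_n -> M i}) (fun i => [ffun _ => a0 i])
  (P := fun i (g : {ffun 'I_n -> M i}) => sati (tenv (fun j => g j) (rho b i)) (P1f n m phi) ->
  (1 - eps) * Lq M R i < ln ((fib phi b (fun j => g j))%:R : R))) => a.
pose x : 'I_n -> elt M := fun j i => a i j.
case: (pselect (satU U (ex_env x) (P1f n m phi))) => h.
  by apply: (U_mono (fiber_P1 h he)) => i hi _.
have : U (fun i => ~ sati (tenv (fun j => x j i) (rho b i)) (P1f n m phi)).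
  by apply/U_notP; rewrite -Ulos.
by move=> H; apply: (U_mono H) => i hi hh; exfalso; apply: hi.
Qed.

Lemma over0 eps : 0 < eps -> U (fun i => forall g : {ffun 'I_n -> M i},
  sati (tenv (fun j => g j) (rho b i)) (P0f n m phi) ->
  ln ((fib phi b (fun j => g j))%:R : R) < eps * Lq M R i).
Proof.
move=> he.
apply: (U_choice (T := fun i => {ffun 'I_n -> M i}) (fun i => [ffun _ => a0 i])
  (P := fun i (g : {ffun 'I_n -> M i}) => sati (tenv (fun j => g j) (rho b i)) (P0f n m phi) ->
  ln ((fib phi b (fun j => g j))%:R : R) < eps * Lq M R i)) => a.
pose x : 'I_n -> elt M := fun j i => a i j.
case: (pselect (satU U (ex_env x) (P0f n m phi))) => h.
  by apply: (U_mono (fiber_P0 h he)) => i hi _.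
have : U (fun i => ~ sati (tenv (fun j => x j i) (rho b i)) (P0f n m phi)).
  by apply/U_notP; rewrite -Ulos.
by move=> H; apply: (U_mono H) => i hi hh; exfalso; apply: hi.
Qed.

End Step2.

End C10.
Import C10.

Module C11.
Local Open Scope ring_scope.

Section Step3.
Variables (L : signature) (I : Type) (U : ultrafilter I) (M : I -> fin_struct L) (R : realType).
Variable a0 : elt M.
Hypothesis Hinf : forall N : nat, U (fun i => (N <= #|M i|)%N).
Hypothesis HF : U (fun i => fieldish (@addi L (M i)) (@muli L (M i)) (zeroi (M i)) (onei (M i))).
Hypothesis Hyp : forall (m : nat) (phi : formula L) (b : 'I_m -> elt M),
  (exists a, phiset U 1 phi b a) ->
  delta U R (phiset U 1 phi b) = 0%E \/ delta U R (phiset U 1 phi b) = 1%E.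
Variables (n m : nat) (phi : formula L) (b : 'I_m -> elt M).

Definition Sp (P : formula L) (i : I) : nat :=
  (\sum_(g : {ffun 'I_n -> M i}) (`[< sati (tenv (fun j => g j) (rho b i)) P >] * fib phi b (fun j => g j)))%N.

Lemma cnt_S i : cnt n.+1 phi b i = (Sp (P0f n m phi) i + Sp (P1f n m phi) i)%N.
Proof. by rewrite cnt_succ /Sp -big_split; apply: eq_bigr => g _; exact: fib_split. Qed.

Lemma fib_le_q i (g : 'I_n -> M i) : (fib phi b g <= #|M i|)%N.
Proof. exact: max_card. Qed.

Lemma Sp_le P i : (Sp P i <= cnt n P b i * #|M i|)%N.
Proof.
rewrite /Sp /cnt /Dset cardP_sum big_distrl /=.
by apply: leq_sum => g _; rewrite leq_mul2l fib_le_q orbT.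
Qed.

Lemma Sp_emp P : Emp U (cnt n P b) -> Emp U (Sp P).
Proof. apply: emp_scale; apply: (U_mono (uf_T U)) => i _; exact: Sp_le. Qed.


Lemma fib_exp i (g : 'I_n -> M i) : (0 < fib phi b g)%N ->
  ((fib phi b g)%:R : R) = expR (ln ((fib phi b g)%:R : R)).
Proof. by move=> h; rewrite lnK // posrE ltr0n. Qed.

Lemma Sp0_dim k : Dim U M R (cnt n (P0f n m phi) b) k -> Dim U M R (Sp (P0f n m phi)) k.
Proof.
move=> hd; rewrite -[k]addn0; apply: (dim_scale Hinf _ hd) => e he.
apply: (U_mono (U_and (over0 a0 Hinf Hyp n phi b he) (Lpos R Hinf))) => i [ho hL].
have := @sum_bounds R {ffun 'I_n -> M i}
  (fun g => `[< sati (tenv (fun j => g j) (rho b i)) (P0f n m phi) >])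
  (fun g => fib phi b (fun j => g j)) (expR ((0%:R - e) * Lq M R i)) (expR ((0%:R + e) * Lq M R i)).
apply.
move=> g /asboolP hg; have hlt := ho g hg.
have [f0 _] := proj1 (proj1 (sem_P phi b (fun j => g j))) hg.
rewrite (fib_exp f0) !ler_expR; split; last by rewrite add0r; exact: ltW.
have : 0 <= ln ((fib phi b (fun j => g j))%:R : R) by apply: ln_nat_ge0.
rewrite sub0r; nra.
Qed.

Lemma Sp1_dim k : Dim U M R (cnt n (P1f n m phi) b) k -> Dim U M R (Sp (P1f n m phi)) k.+1.
Proof.
move=> hd; rewrite -addn1; apply: (dim_scale Hinf _ hd) => e he.
apply: (U_mono (U_and (over1 a0 Hinf HF Hyp n phi b he) (Lpos R Hinf))) => i [ho hL].
have := @sum_bounds R {ffun 'I_n -> M i}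
  (fun g => `[< sati (tenv (fun j => g j) (rho b i)) (P1f n m phi) >])
  (fun g => fib phi b (fun j => g j)) (expR ((1%:R - e) * Lq M R i)) (expR ((1%:R + e) * Lq M R i)).
apply.
move=> g /asboolP hg; have hlt := ho g hg.
have [f0 _] := proj1 (proj2 (sem_P phi b (fun j => g j))) hg.
rewrite (fib_exp f0) !ler_expR; split; first exact: ltW.
have := ln_le R f0 (fib_le_q (fun j => g j)); rewrite -/(Lq M R i) => hq.
nra.
Qed.

End Step3.

End C11.
Import C11.

Module C12.
Local Open Scope ring_scope.

Section Ind.
Variables (L : signature) (I : Type) (U : ultrafilter I) (M : I -> fin_struct L) (R : realType).
Variable a0 : elt M.
Hypothesis Hinf : forall N : nat, U (fun i => (N <= #|M i|)%N).
Hypothesis HF : U (fun i => fieldish (@addi L (M i)) (@muli L (M i)) (zeroi (M i)) (onei (M i))).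
Hypothesis Hyp : forall (m : nat) (phi : formula L) (b : 'I_m -> elt M),
  (exists a, phiset U 1 phi b a) ->
  delta U R (phiset U 1 phi b) = 0%E \/ delta U R (phiset U 1 phi b) = 1%E.

Definition Claim (n : nat) := forall m (phi : formula L), exists theta : nat -> formula L,
  forall b : 'I_m -> elt M,
  (Emp U (cnt n phi b) /\ forall j, ~ zdef U (theta j) b) \/
  (exists k, (k <= n)%N /\ Dim U M R (cnt n phi b) k /\ forall j, zdef U (theta j) b <-> (j <= k)%N).

Lemma zdef_or m p q (b : 'I_m -> elt M) : zdef U (f_or p q) b <-> zdef U p b \/ zdef U q b.
Proof.
rewrite /zdef /=; split; last by case=> H [] //.
move=> H; case: (pselect (satU U (tup_env b (fun _ => zeroU M)) p)) => hp; first by left.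
case: (pselect (satU U (tup_env b (fun _ => zeroU M)) q)) => hq; first by right.
by exfalso; apply: H.
Qed.

Lemma zdef_false m (b : 'I_m -> elt M) : ~ zdef U (ffalse L) b.
Proof. by []. Qed.

Lemma cnt0_T m phi (b : 'I_m -> elt M) i : sati (rho b i) phi -> cnt 0 phi b i = 1%N.
Proof.
move=> h; rewrite /cnt /Dset.
have -> : [set t : {ffun 'I_0 -> M i} | `[< sati (tenv (fun j => t j) (rho b i)) phi >]] = finset.setT.
  apply/finset.setP => t; rewrite !inE; apply/asboolP; move: h; apply: sati_extI => k.
  by rewrite tenv0.
by rewrite cardsT card_ffun card_ord expn0.
Qed.

Lemma cnt0_F m phi (b : 'I_m -> elt M) i : ~ sati (rho b i) phi -> cnt 0 phi b i = 0%N.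
Proof.
move=> h; rewrite /cnt /Dset.
have -> : [set t : {ffun 'I_0 -> M i} | `[< sati (tenv (fun j => t j) (rho b i)) phi >]] = finset.set0.
  apply/finset.setP => t; rewrite !inE; apply/asboolP => h'; apply: h; move: h'; apply: sati_extI => k.
  by rewrite tenv0.
by rewrite cards0.
Qed.

Lemma claim0 : Claim 0.
Proof.
move=> m phi; exists (fun j => if j is 0 then phi else ffalse L) => b.
case: (pselect (zdef U phi b)) => h.
  right; exists 0%N; split => //; split.
    move=> e he; have := h; rewrite (zdef_los U a0) => H.
    apply: (U_mono (U_and H (Lpos R Hinf))) => i [hs hL].
    rewrite (cnt0_T hs) ln1; split => //; split; nra.
  by case=> [|j] //; split => // /zdef_false.
left; split.
  have : U (fun i => ~ sati (rho b i) phi) by apply/U_notP; rewrite -(zdef_los U a0).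
  by move=> H; apply: (U_mono H) => i hi; rewrite cnt0_F.
by case=> [|j] //; apply: zdef_false.
Qed.

Lemma claimS n : Claim n -> Claim n.+1.
Proof.
move=> IH m phi.
have [th0 H0] := IH m (P0f n m phi).
have [th1 H1] := IH m (P1f n m phi).
exists (fun j => if j is j'.+1 then f_or (th0 j) (th1 j') else f_or (th0 0%N) (th1 0%N)) => b.
have ecnt : cnt n.+1 phi b = (fun i => Sp n phi b (P0f n m phi) i + Sp n phi b (P1f n m phi) i)%N.
  by apply: functional_extensionality_dep => i; rewrite cnt_S.
rewrite ecnt.
case: (H0 b) => [[e0 t0]|[k0 [hk0 [d0 t0]]]]; case: (H1 b) => [[e1 t1]|[k1 [hk1 [d1 t1]]]].
- left; split; first exact: (emp_add (Sp_emp phi e0) (Sp_emp phi e1)).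
  case=> [|j] /zdef_or [] //; [exact: t0 | exact: t1 | exact: t0 | exact: t1].
- right; exists k1.+1; split; first by [].
  split; first exact: (dim_add_emp (Sp_emp phi e0) (Sp1_dim a0 Hinf HF Hyp d1)).
  case=> [|j]; rewrite zdef_or; split.
  + by move=> _.
  + by move=> _; right; apply/t1.
  + by case=> [/t0 []|/t1].
  + by move=> hj; right; apply/t1.
- right; exists k0; split; first by lia.
  split; first exact: (dim_emp_add (Sp0_dim a0 Hinf Hyp d0) (Sp_emp phi e1)).
  case=> [|j]; rewrite zdef_or; split.
  + by case=> [/t0|/t1 []].
  + by move=> hj; left; apply/t0.
  + by case=> [/t0|/t1 []].
  + by move=> hj; left; apply/t0.
- right; exists (maxn k0 k1.+1); split; first by lia.
  split; first exact: (dim_add Hinf (Sp0_dim a0 Hinf Hyp d0) (Sp1_dim a0 Hinf HF Hyp d1)).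
  case=> [|j]; rewrite zdef_or t0 t1; split.
  + by move=> _; lia.
  + by move=> _; left.
  + by case=> h; lia.
  + move=> h; case: (leqP j.+1 k0) => h'; first by left.
    by right; lia.
Qed.

Lemma claim_all n : Claim n.
Proof. elim: n => [|n IH]; [exact: claim0 | exact: claimS]. Qed.

End Ind.

End C12.
Import C12.

Unset Implicit Arguments. Set Strict Implicit.
Local Open Scope ring_scope.
Local Open Scope ereal_scope.

Theorem lemma2p13 (R : realType) (L : signature) (I : Type) (U : ultrafilter I)
    (M : I -> fin_struct L) :
  ultra_is_field U M ->
  ultra_infinite U M ->
  (forall (m : nat) (phi : formula L) (b : 'I_m -> elt M),
     (exists a, phiset U 1 phi b a) ->
     delta U R (phiset U 1 phi b) = 0 \/ delta U R (phiset U 1 phi b) = 1) ->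
  delta_definable U M R /\
  (forall (n m : nat) (psi : formula L) (c : 'I_m -> elt M),
     (exists a, phiset U n psi c a) ->
     exists k : nat, (k <= n)%N /\ delta U R (phiset U n psi c) = (k%:R)%:E).
Proof.
move=> Hf Hi Hyp.
have [a1 _] := Hi 1%N.
pose a0 := a1 ord0.
have Hinf : forall N : nat, U (fun i => (N <= #|M i|)%N).
  move=> N; have [a ha] := Hi N.
  have H : U (fun i => forall p : 'I_N * 'I_N, p.1 != p.2 -> a p.1 i <> a p.2 i).
    apply: (U_forall_fin (A := fun p i => p.1 != p.2 -> a p.1 i <> a p.2 i)) => -[j k] /=.
    case: (eqVneq j k) => [->|hjk].
      by apply: (U_mono (uf_T U)) => i _ /=.
    have := ha j k hjk; rewrite /eqU => /U_notP H2.
    by apply: (U_mono H2) => i h _.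
  apply: (U_mono H) => i h.
  have inj : injective (fun j : 'I_N => a j i).
    move=> j k e; apply/eqP; apply/negPn/negP => hne; exact: (h (j, k) hne e).
  by have := leq_card _ inj; rewrite card_ord.
have HF := field_transfer a0 Hf.
have CL := claim_all a0 Hinf HF Hyp.
split; first split.
- move=> n m phi r1 r2 hr.
  have [th Hth] := CL n m phi.
  pose j0 := if (0 <= r1)%R then (Num.trunc r1).+1 else 0%N.
  have key : forall k : nat, (k%:R <= r1)%R = (k < j0)%N.
    move=> k; rewrite /j0; case: ifP => h; first by rewrite ltnS truncn_ge_nat.
    apply/negbTE; rewrite -ltNge; apply: (lt_le_trans _ (ler0n _ k)).
    by rewrite ltNge h.
  exists (fnot (th j0)) => b.
  case: (Hth b) => [[e t]|[k [hk [d t]]]].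
    rewrite (delta_cnt a0 (st_of_Emp Hinf e)); split => _; first exact: (t j0).
    exact: ltNyr.
  rewrite (delta_cnt a0 (st_of_Dim Hinf d)); split.
    rewrite lee_fin key => hle hz; move/t: hz; rewrite leqNgt hle //.
  move=> hz; rewrite lte_fin; apply: (le_lt_trans _ hr); rewrite key ltnNge.
  by apply/negP => /t.
- move=> n m phi.
  have [th Hth] := CL n m phi.
  exists (-oo%E :: [seq (k%:R)%:E | k <- iota 0 n.+1]) => b.
  case: (Hth b) => [[e t]|[k [hk [d t]]]].
    by rewrite (delta_cnt a0 (st_of_Emp Hinf e)) in_cons eqxx.
  rewrite (delta_cnt a0 (st_of_Dim Hinf d)) in_cons; apply/orP; right.
  by apply/mapP; exists k => //; rewrite mem_iota add0n ltnS hk.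
- move=> n m psi c [a ha].
  have [th Hth] := CL n m psi.
  case: (Hth c) => [[e _]|[k [hk [d _]]]].
    exfalso; have := (proj1 (rep_phiset U a0 psi c a)) ha => H.
    apply: (U_contra H); apply: (U_mono e) => i e0 hin.
    have : (0 < cnt n psi c i)%N by rewrite card_gt0; apply/set0Pn; eexists; exact: hin.
    by rewrite e0.
  by exists k; split => //; exact: (delta_cnt a0 (st_of_Dim Hinf d)).
Qed.
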